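(* Let $k$ be a field containing a primitive fourth root of unity $i$, and let $H_{\pm}(8)$ be the quasi-Hopf algebra described in the context, with dual basis $\{P_{g^ax^b}\mid 0\le a\le1,\ 0\le b\le 3\}$ of $H_\pm(8)^*$ corresponding to the basis $\{g^ax^b\}$. Then the space of left cointegrals on $H_{\pm}(8)$ is $kP_{x^3}$.
   Context: $H_{\pm}(8)$ is the unital algebra generated by $g,x$ with relations $g^2=1$, $x^4=0$, $gx=-xg$ (basis $g^ax^b$, $0\le a\le1$, $0\le b\le3$), with $\Delta(g)=g\otimes g$, $\varepsilon(g)=1$, $\Delta(x)=x\otimes(p_+\pm ip_-)+1\otimes p_+x+g\otimes p_-x$, $\varepsilon(x)=0$, where $p_\pm=\frac12(1\pm g)$; reassociator $\Phi=1\otimes1\otimes1-2p_-\otimes p_-\otimes p_-$, antipode $S(g)=g$, $S(x)=-x(p_+\pm ip_-)$, and $\alpha=g$, $\beta=1$. (Two quasi-Hopf algebras, one for each sign.) Its modular element $\mu$ satisfies $\mu(g)=-1$, $\mu(x)=0$. General definitions, for a finite dimensional quasi-Hopf algebra $(H,\Delta,\varepsilon,\Phi,S,\alpha,\beta)$ (axioms of Drinfeld: $(\mathrm{Id}\otimes\Delta)\Delta(h)=\Phi(\Delta\otimes\mathrm{Id})\Delta(h)\Phi^{-1}$, counit axioms, 3-cocycle condition for $\Phi$, $(\mathrm{Id}\otimes\varepsilon\otimes\mathrm{Id})(\Phi)=1\otimes1$, $S(h_1)\alpha h_2=\varepsilon(h)\alpha$, $h_1\beta S(h_2)=\varepsilon(h)\beta$,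 $X^1\beta S(X^2)\alpha X^3=1=S(x^1)\alpha x^2\beta S(x^3)$), with $\Delta(h)=h_1\otimes h_2$, $\Phi=X^1\otimes X^2\otimes X^3$, $\Phi^{-1}=x^1\otimes x^2\otimes x^3$: $\gamma=S(x^1X^2)\alpha x^2X^3_1\otimes S(X^1)\alpha x^3X^3_2$; $\delta=X^1_1x^1\beta S(X^3)\otimes X^1_2x^2\beta S(X^2x^3)$; $f=f^1\otimes f^2=(S\otimes S)(\Delta^{\rm op}(x^1))\gamma\Delta(x^2\beta S(x^3))$ with inverse $f^{-1}=g^1\otimes g^2=\Delta(S(x^1)\alpha x^2)\delta(S\otimes S)(\Delta^{\rm cop}(x^3))$; $p_R=p^1\otimes p^2=x^1\otimes x^2\beta S(x^3)$; $q_R=q^1\otimes q^2=X^1\otimes S^{-1}(\alpha X^3)X^2$; $U=g^1S(q^2)\otimes g^2S(q^1)$, $V=S^{-1}(f^2p^2)\otimes S^{-1}(f^1p^1)$. Left integrals: $ht=\varepsilon(h)t$ for all $h$. $\mu\in H^*$ is the algebra map with $th=\mu(h)t$ for left integrals $t$. A left cointegral is $\lambda\in H^*$ with $\lambda(V^2h_2U^2)V^1h_1U^1=\mu(x^1)\lambda(hS(x^2))x^3$ for all $h$. *)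

(* Defs.v *)
From HB Require Import structures.
From mathcomp Require Import all_boot all_order all_algebra.
Set Implicit Arguments. Unset Strict Implicit. Unset Printing Implicit Defensive.
Import GRing.Theory.
Local Open Scope ring_scope.

(* Index set of the basis g^a x^b, 0 <= a <= 1, 0 <= b <= 3: the pair (a, b). *)
Definition B := ('I_2 * 'I_4)%type.

Section H8.
Variables (k : fieldType).

(* Elements of H, H(x)H, H(x)H(x)H as coefficient vectors on the basis
   g^a x^b, resp. on tensor products of basis vectors. *)
Definition H := {ffun B -> k}.

Definition scl (T : finType) (c : k) (u : {ffun T -> k}) : {ffun T -> k} :=
  [ffun t => c * u t].
Local Notation "c *F u" := (scl c u) (at level 40).
Definition H2 := {ffun B * B -> k}.
Definition H3 := {ffun B * B * B -> k}.

(* structure constants: g^a x^b * g^c x^d = (-1)^(b c) g^(a+c mod 2) x^(b+d)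
   (zero when b + d >= 4), from g^2 = 1, x^4 = 0, gx = -xg. *)
Definition cst (p q t : B) : k :=
  if ((val t.1 == (val p.1 + val q.1) %% 2)%N && (val t.2 == val p.2 + val q.2)%N)
  then (-1) ^+ (val p.2 * val q.1) else 0.

Definition mulH (u v : H) : H :=
  [ffun t => \sum_p \sum_q u p * v q * cst p q t].
Definition mulH2 (u v : H2) : H2 :=
  [ffun t => \sum_p \sum_q u p * v q * (cst p.1 q.1 t.1 * cst p.2 q.2 t.2)].
Definition mulH3 (u v : H3) : H3 :=
  [ffun t => \sum_p \sum_q u p * v q *
     (cst p.1.1 q.1.1 t.1.1 * cst p.1.2 q.1.2 t.1.2 * cst p.2 q.2 t.2)].

Definition eb (p : B) : H := [ffun t => (t == p)%:R].
Definition oneH : H := eb (ord0, ord0).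
Definition gH : H := eb (inord 1, ord0).
Definition xH : H := eb (ord0, inord 1).

Definition tens (u v : H) : H2 := [ffun t => u t.1 * v t.2].
Definition tens3 (u v w : H) : H3 := [ffun t => u t.1.1 * v t.1.2 * w t.2].
Definition one2 : H2 := tens oneH oneH.
Definition one3 : H3 := tens3 oneH oneH oneH.

Definition powH (u : H) (n : nat) : H := iter n (mulH u) oneH.
Definition pow2 (u : H2) (n : nat) : H2 := iter n (mulH2 u) one2.

Definition pplus : H := 2^-1 *F (oneH + gH).
Definition pminus : H := 2^-1 *F (oneH - gH).

Definition Phi : H3 := one3 - 2 *F tens3 pminus pminus pminus.
Definition alphaH : H := gH.
Definition betaH : H := oneH.

(* the modular element: algebra map with mu(g) = -1, mu(x) = 0 *)
Definition muH (u : H) : k :=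
  \sum_p u p * (if val p.2 == 0%N then (-1) ^+ val p.1 else 0).

Definition evalf (lam : {ffun B -> k}) (u : H) : k := \sum_p lam p * u p.

Definition Pdual (p : B) : {ffun B -> k} := [ffun t => (t == p)%:R].

(* j stands for the scalar +-i (the sign of the quasi-Hopf algebra H_{+-}(8)) *)
Variable j : k.

Definition DeltaG : H2 := tens gH gH.
Definition DeltaX : H2 :=
  tens xH (pplus + j *F pminus) + tens oneH (mulH pplus xH) + tens gH (mulH pminus xH).
(* Delta is the algebra map determined by Delta(g), Delta(x) *)
Definition DeltaB (p : B) : H2 := mulH2 (pow2 DeltaG p.1) (pow2 DeltaX p.2).
Definition Delta (u : H) : H2 := \sum_p u p *F DeltaB p.

(* S is the anti-algebra map determined by S(g) = g, S(x) = -x(p_+ +- i p_-) *)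
Definition SX : H := - mulH xH (pplus + j *F pminus).
Definition SB (p : B) : H := mulH (powH SX p.2) (powH gH p.1).
Definition S (u : H) : H := \sum_p u p *F SB p.

Variables (Sinv : H -> H) (Phiinv : H3).

(* (S (x) S)(Delta^op(T)) for T in H(x)H, extended linearly *)
Definition SSop (T : H2) : H2 := \sum_p T p *F tens (S (eb p.2)) (S (eb p.1)).

(* X = Phi (index p), x = Phi^{-1} (index q) *)
Definition gammaE : H2 :=
  \sum_p \sum_q (Phi p * Phiinv q) *F
    mulH2 (tens (mulH (mulH (S (mulH (eb q.1.1) (eb p.1.2))) alphaH) (eb q.1.2))
                (mulH (mulH (S (eb p.1.1)) alphaH) (eb q.2)))
          (Delta (eb p.2)).

Definition deltaE : H2 :=
  \sum_p \sum_q (Phi p * Phiinv q) *F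
    mulH2 (Delta (eb p.1.1))
          (tens (mulH (mulH (eb q.1.1) betaH) (S (eb p.2)))
                (mulH (mulH (eb q.1.2) betaH) (S (mulH (eb p.1.2) (eb q.2))))).

Definition fE : H2 :=
  \sum_q Phiinv q *F
    mulH2 (mulH2 (SSop (Delta (eb q.1.1))) gammaE)
          (Delta (mulH (mulH (eb q.1.2) betaH) (S (eb q.2)))).

Definition finvE : H2 :=
  \sum_q Phiinv q *F
    mulH2 (mulH2 (Delta (mulH (mulH (S (eb q.1.1)) alphaH) (eb q.1.2))) deltaE)
          (SSop (Delta (eb q.2))).

Definition pR : H2 :=
  \sum_q Phiinv q *F tens (eb q.1.1) (mulH (mulH (eb q.1.2) betaH) (S (eb q.2))).

Definition qR : H2 :=
  \sum_p Phi p *F tens (eb p.1.1) (mulH (Sinv (mulH alphaH (eb p.2))) (eb p.1.2)).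

(* U = g^1 S(q^2) (x) g^2 S(q^1),  V = S^{-1}(f^2 p^2) (x) S^{-1}(f^1 p^1) *)
Definition UE : H2 :=
  \sum_a \sum_c (finvE a * qR c) *F
    tens (mulH (eb a.1) (S (eb c.2))) (mulH (eb a.2) (S (eb c.1))).

Definition VE : H2 :=
  \sum_a \sum_c (fE a * pR c) *F
    tens (Sinv (mulH (eb a.2) (eb c.2))) (Sinv (mulH (eb a.1) (eb c.1))).

(* lambda(V^2 h_2 U^2) V^1 h_1 U^1 = mu(x^1) lambda(h S(x^2)) x^3 for all h *)
Definition is_left_cointegral (lam : {ffun B -> k}) : Prop :=
  forall h : H,
    \sum_a \sum_c \sum_d
       (VE a * UE c * Delta h d *
          evalf lam (mulH (mulH (eb a.2) (eb d.2)) (eb c.2))) *F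
       mulH (mulH (eb a.1) (eb d.1)) (eb c.1)
    = \sum_q (Phiinv q * muH (eb q.1.1) * evalf lam (mulH h (S (eb q.1.2)))) *F
        eb q.2.

End H8.

Notation "c *F u" := (scl c u) (at level 40).

Definition x3idx : B := (ord0, inord 3).

(* Main.v *)
Require Import Defs.
From HB Require Import structures.
From Stdlib Require Import ZArith.
From mathcomp Require Import all_boot all_order all_algebra.
From mathcomp Require Import ssrZ ring zify.
Import ssrZ.Instances.
Import GRing.Theory.
Set Implicit Arguments. Unset Strict Implicit.
Local Open Scope ring_scope.

Definition dd := (Z * Z * nat)%type.
Definition Z_1 : Z := Zpos xH.
Definition Z_2 : Z := Zpos (xO xH).
Definition d0 : dd := (Z0, Z0, 0%N).
Definition d1 : dd := (Z_1, Z0, 0%N).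
Definition p2 (n : nat) : Z := iter n (Z.mul Z_2) Z_1.
Definition dadd (x y : dd) : dd :=
  let '(a, b, e) := x in let '(c, d, f) := y in
  if (e <= f)%N then (Z.add (Z.mul a (p2 (f - e))) c, Z.add (Z.mul b (p2 (f - e))) d, f)
  else (Z.add a (Z.mul c (p2 (e - f))), Z.add b (Z.mul d (p2 (e - f))), e).
Definition dmul (x y : dd) : dd :=
  let '(a, b, e) := x in let '(c, d, f) := y in
  (Z.sub (Z.mul a c) (Z.mul b d), Z.add (Z.mul a d) (Z.mul b c), (e + f)%N).
Definition dz (x : dd) : bool := Z.eqb x.1.1 Z0 && Z.eqb x.1.2 Z0.

Definition enc1 (t : B) : nat := (4 * val t.1 + val t.2)%N.
Definition dec1 (n : nat) : B := (inord (n %/ 4), inord (n %% 4)).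
Definition enc2 (t : B * B) : nat := (8 * enc1 t.1 + enc1 t.2)%N.
Definition dec2 (n : nat) : B * B := (dec1 (n %/ 8), dec1 (n %% 8)).
Definition enc3 (t : B * B * B) : nat := (8 * enc2 t.1 + enc1 t.2)%N.
Definition dec3 (n : nat) : B * B * B := (dec2 (n %/ 8), dec1 (n %% 8)).

Definition dsum (s : seq nat) (f : nat -> dd) : dd := foldr (fun n acc => dadd (f n) acc) d0 s.
Definition dsk (x y : dd) : dd := if dz x then d0 else dmul x y.
Fixpoint vadd (u v : seq dd) : seq dd :=
  match u, v with
  | x :: u', y :: v' => dadd x y :: vadd u' v'
  | [::], _ => v
  | _, [::] => u
  end.
Definition vscl (c : dd) (u : seq dd) : seq dd := map (dmul c) u.
Definition vsum (s : seq nat) (F : nat -> seq dd) : seq dd := foldr (fun n acc => vadd (F n) acc) [::] s.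
Definition vlin (s : seq nat) (cf : nat -> dd) (F : nat -> seq dd) : seq dd :=
  foldr (fun n acc => if dz (cf n) then acc else vadd (vscl (cf n) (F n)) acc) [::] s.
Definition deq (x y : dd) : bool :=
  let '(a, b, e) := x in let '(c, d, f) := y in
  Z.eqb (Z.mul a (p2 f)) (Z.mul c (p2 e)) && Z.eqb (Z.mul b (p2 f)) (Z.mul d (p2 e)).
Definition veq (u v : seq dd) : bool :=
  all (fun i => deq (nth d0 u i) (nth d0 v i)) (iota 0 (maxn (size u) (size v))).
Fixpoint dsumv (m : nat) (u : seq dd) (f : nat -> dd) : dd :=
  match u with
  | [::] => d0
  | x :: u' => if dz x then dsumv m.+1 u' f else dadd (dmul x (f m)) (dsumv m.+1 u' f)
  end.
Definition cmulg (N : nat) (Cc : nat -> nat -> nat -> dd) (u v : seq dd) : seq dd :=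
  let u' := take N u in let v' := take N v in
  mkseq (fun t => dsumv 0 u' (fun p => dsumv 0 v' (fun q => Cc p q t))) N.

Definition dsign (n : nat) : dd := if odd n then (Zneg xH, Z0, 0%N) else d1.
Definition cstc (n m u : nat) : dd :=
  if (u %/ 4 == (n %/ 4 + m %/ 4) %% 2)%N && (u %% 4 == n %% 4 + m %% 4)%N
  then dsign (n %% 4 * (m %/ 4)) else d0.
Definition cstc2 (n m u : nat) : dd :=
  dsk (cstc (n %/ 8) (m %/ 8) (u %/ 8)) (cstc (n %% 8) (m %% 8) (u %% 8)).
Definition cstc3 (n m u : nat) : dd :=
  dsk (dsk (cstc (n %/ 8 %/ 8) (m %/ 8 %/ 8) (u %/ 8 %/ 8))
           (cstc (n %/ 8 %% 8) (m %/ 8 %% 8) (u %/ 8 %% 8)))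
      (cstc (n %% 8) (m %% 8) (u %% 8)).

Definition ceb (n : nat) : seq dd := mkseq (fun i => if i == n then d1 else d0) 8.
Definition cmul := cmulg 8 cstc.
Definition cmul2 := cmulg 64 cstc2.
Definition cmul3 := cmulg 512 cstc3.
Definition ctens (u v : seq dd) : seq dd :=
  mkseq (fun n => dmul (nth d0 u (n %/ 8)) (nth d0 v (n %% 8))) 64.
Definition ctens3 (u v w : seq dd) : seq dd :=
  mkseq (fun n => dmul (dmul (nth d0 u (n %/ 8 %/ 8)) (nth d0 v (n %/ 8 %% 8))) (nth d0 w (n %% 8))) 512.
Definition cone := ceb 0.
Definition cg := ceb 4.
Definition cx := ceb 1.
Definition cone2 := ctens cone cone.
Definition cone3 := ctens3 cone cone cone.
Definition cpow (u : seq dd) (n : nat) := iter n (cmul u) cone.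
Definition cpow2 (u : seq dd) (n : nat) := iter n (cmul2 u) cone2.
Definition dhalf : dd := (Z_1, Z0, 1%N).
Definition dm1 : dd := (Zneg xH, Z0, 0%N).
Definition d2 : dd := (Z_2, Z0, 0%N).
Definition dj : dd := (Z0, Z_1, 0%N).
Definition cpp := vscl dhalf (vadd cone cg).
Definition cpm := vscl dhalf (vadd cone (vscl dm1 cg)).
Definition cPhi := vadd cone3 (vscl dm1 (vscl d2 (ctens3 cpm cpm cpm))).
Definition cDG := ctens cg cg.
Definition cDX := vadd (vadd (ctens cx (vadd cpp (vscl dj cpm))) (ctens cone (cmul cpp cx)))
  (ctens cg (cmul cpm cx)).
Definition cDB (n : nat) := cmul2 (cpow2 cDG (n %/ 4)) (cpow2 cDX (n %% 4)).
Time Definition cDBt := Eval vm_compute in mkseq cDB 8.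
Lemma cDBtE : cDBt = mkseq cDB 8. Proof. by vm_compute. Qed.
Definition cDelta (u : seq dd) := vlin (iota 0 8) (nth d0 u) (nth [::] cDBt).
Definition cSX := vscl dm1 (cmul cx (vadd cpp (vscl dj cpm))).
Definition cSB (n : nat) := cmul (cpow cSX (n %% 4)) (cpow cg (n %/ 4)).
Time Definition cSBt := Eval vm_compute in mkseq cSB 8.
Lemma cSBtE : cSBt = mkseq cSB 8. Proof. by vm_compute. Qed.
Definition cS (u : seq dd) := vlin (iota 0 8) (nth d0 u) (nth [::] cSBt).

Definition cSinvT : seq (seq dd) := [:: [:: ((Zpos 1%positive), Z0, 0%N); (Z0, Z0, 0%N); (Z0, Z0, 0%N); (Z0, Z0, 0%N); (Z0, Z0, 0%N); (Z0, Z0, 0%N); (Z0, Z0, 0%N); (Z0, Z0, 0%N)];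
  [:: (Z0, Z0, 0%N); ((Zneg 1%positive), (Zpos 1%positive), 1%N); (Z0, Z0, 0%N); (Z0, Z0, 0%N); (Z0, Z0, 0%N); ((Zneg 1%positive), (Zneg 1%positive), 1%N); (Z0, Z0, 0%N); (Z0, Z0, 0%N)];
  [:: (Z0, Z0, 0%N); (Z0, Z0, 0%N); (Z0, (Zneg 1%positive), 0%N); (Z0, Z0, 0%N); (Z0, Z0, 0%N); (Z0, Z0, 0%N); (Z0, Z0, 0%N); (Z0, Z0, 0%N)];
  [:: (Z0, Z0, 0%N); (Z0, Z0, 0%N); (Z0, Z0, 0%N); ((Zpos 1%positive), (Zpos 1%positive), 1%N); (Z0, Z0, 0%N); (Z0, Z0, 0%N); (Z0, Z0, 0%N); ((Zneg 1%positive), (Zpos 1%positive), 1%N)];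
  [:: (Z0, Z0, 0%N); (Z0, Z0, 0%N); (Z0, Z0, 0%N); (Z0, Z0, 0%N); ((Zpos 1%positive), Z0, 0%N); (Z0, Z0, 0%N); (Z0, Z0, 0%N); (Z0, Z0, 0%N)];
  [:: (Z0, Z0, 0%N); ((Zpos 1%positive), (Zpos 1%positive), 1%N); (Z0, Z0, 0%N); (Z0, Z0, 0%N); (Z0, Z0, 0%N); ((Zpos 1%positive), (Zneg 1%positive), 1%N); (Z0, Z0, 0%N); (Z0, Z0, 0%N)];
  [:: (Z0, Z0, 0%N); (Z0, Z0, 0%N); (Z0, Z0, 0%N); (Z0, Z0, 0%N); (Z0, Z0, 0%N); (Z0, Z0, 0%N); (Z0, (Zneg 1%positive), 0%N); (Z0, Z0, 0%N)];
  [:: (Z0, Z0, 0%N); (Z0, Z0, 0%N); (Z0, Z0, 0%N); ((Zpos 1%positive), (Zneg 1%positive), 1%N); (Z0, Z0, 0%N); (Z0, Z0, 0%N); (Z0, Z0, 0%N); ((Zneg 1%positive), (Zneg 1%positive), 1%N)]].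
Definition cSinv (u : seq dd) := vlin (iota 0 8) (nth d0 u) (nth [::] cSinvT).
Definition SinvCheck : bool := all (fun n => veq (cS (nth [::] cSinvT n)) (ceb n)) (iota 0 8).
Lemma SinvCheckT : SinvCheck. Proof. by vm_compute. Qed.

Definition cstAssocCheck : bool :=
  all (fun a => all (fun b => all (fun c => all (fun d =>
    deq (dsum (iota 0 8) (fun m => dmul (cstc a b m) (cstc m c d)))
        (dsum (iota 0 8) (fun m => dmul (cstc b c m) (cstc a m d))))
  (iota 0 8)) (iota 0 8)) (iota 0 8)) (iota 0 8).
Lemma cstAssocCheckT : cstAssocCheck. Proof. by vm_compute. Qed.
Definition cstUnitCheck : bool :=
  all (fun m => all (fun u => deq (cstc 0 m u) (if m == u then d1 else d0)) (iota 0 8)) (iota 0 8).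
Lemma cstUnitCheckT : cstUnitCheck. Proof. by vm_compute. Qed.

Definition cPhiV := Eval vm_compute in cPhi.
Lemma cPhiVE : cPhiV = cPhi. Proof. by vm_compute. Qed.
Time Lemma PhiPhiCheck : veq (cmul3 cPhiV cPhiV) cone3. Proof. by vm_compute. Qed.
Time Lemma Phi1Check : veq (cmul3 cPhiV cone3) cPhiV. Proof. by vm_compute. Qed.


Definition cgamma : seq dd :=
  vlin (iota 0 512) (nth d0 cPhiV) (fun n => vlin (iota 0 512) (nth d0 cPhiV) (fun m =>
    cmul2 (ctens (cmul (cmul (cS (cmul (ceb (m %/ 8 %/ 8)) (ceb (n %/ 8 %% 8)))) cg)
                       (ceb (m %/ 8 %% 8)))
                 (cmul (cmul (cS (ceb (n %/ 8 %/ 8))) cg) (ceb (m %% 8))))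
          (cDelta (ceb (n %% 8))))).
Definition cgammaV := Eval vm_compute in cgamma.
Lemma cgammaVE : cgammaV = cgamma. Proof. by vm_compute. Qed.

Definition cSSop (T : seq dd) : seq dd :=
  vlin (iota 0 64) (nth d0 T) (fun n => ctens (cS (ceb (n %% 8))) (cS (ceb (n %/ 8)))).
Definition cdelta : seq dd :=
  vlin (iota 0 512) (nth d0 cPhiV) (fun n => vlin (iota 0 512) (nth d0 cPhiV) (fun m =>
    cmul2 (cDelta (ceb (n %/ 8 %/ 8)))
      (ctens (cmul (cmul (ceb (m %/ 8 %/ 8)) cone) (cS (ceb (n %% 8))))
             (cmul (cmul (ceb (m %/ 8 %% 8)) cone) (cS (cmul (ceb (n %/ 8 %% 8)) (ceb (m %% 8)))))))).
Definition cdeltaV := Eval vm_compute in cdelta.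
Lemma cdeltaVE : cdeltaV = cdelta. Proof. by vm_compute. Qed.
Definition cf : seq dd :=
  vlin (iota 0 512) (nth d0 cPhiV) (fun m =>
    cmul2 (cmul2 (cSSop (cDelta (ceb (m %/ 8 %/ 8)))) cgammaV)
          (cDelta (cmul (cmul (ceb (m %/ 8 %% 8)) cone) (cS (ceb (m %% 8)))))).
Definition cfV := Eval vm_compute in cf.
Lemma cfVE : cfV = cf. Proof. by vm_compute. Qed.
Definition cfinv : seq dd :=
  vlin (iota 0 512) (nth d0 cPhiV) (fun m =>
    cmul2 (cmul2 (cDelta (cmul (cmul (cS (ceb (m %/ 8 %/ 8))) cg) (ceb (m %/ 8 %% 8)))) cdeltaV)
          (cSSop (cDelta (ceb (m %% 8))))).
Definition cfinvV := Eval vm_compute in cfinv.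
Lemma cfinvVE : cfinvV = cfinv. Proof. by vm_compute. Qed.
Definition cpR : seq dd :=
  vlin (iota 0 512) (nth d0 cPhiV) (fun m =>
    ctens (ceb (m %/ 8 %/ 8)) (cmul (cmul (ceb (m %/ 8 %% 8)) cone) (cS (ceb (m %% 8))))).
Definition cpRV := Eval vm_compute in cpR.
Lemma cpRVE : cpRV = cpR. Proof. by vm_compute. Qed.
Definition cqR : seq dd :=
  vlin (iota 0 512) (nth d0 cPhiV) (fun n =>
    ctens (ceb (n %/ 8 %/ 8)) (cmul (cSinv (cmul cg (ceb (n %% 8)))) (ceb (n %/ 8 %% 8)))).
Definition cqRV := Eval vm_compute in cqR.
Lemma cqRVE : cqRV = cqR. Proof. by vm_compute. Qed.
Definition cU : seq dd :=
  vlin (iota 0 64) (nth d0 cfinvV) (fun n => vlin (iota 0 64) (nth d0 cqRV) (fun m =>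
    ctens (cmul (ceb (n %/ 8)) (cS (ceb (m %% 8)))) (cmul (ceb (n %% 8)) (cS (ceb (m %/ 8)))))).
Definition cV : seq dd :=
  vlin (iota 0 64) (nth d0 cfV) (fun n => vlin (iota 0 64) (nth d0 cpRV) (fun m =>
    ctens (cSinv (cmul (ceb (n %% 8)) (ceb (m %% 8)))) (cSinv (cmul (ceb (n %/ 8)) (ceb (m %/ 8)))))).
Lemma cUCheck : veq cU (ctens cg cone). Proof. by vm_compute. Qed.
Lemma cVCheck : veq cV (ctens cone cone). Proof. by vm_compute. Qed.

Definition cmu (u : seq dd) : dd :=
  dsum (iota 0 8) (fun p => dmul (nth d0 u p) (if (p %% 4 == 0)%N then dsign (p %/ 4) else d0)).
Definition cL (n : nat) : seq dd :=
  vlin (iota 0 64) (nth d0 (ctens cone cone)) (fun a =>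
  vlin (iota 0 64) (nth d0 (ctens cg cone)) (fun c =>
  vlin (iota 0 64) (nth d0 (cDelta (ceb n))) (fun d =>
    ctens (cmul (cmul (ceb (a %/ 8)) (ceb (d %/ 8))) (ceb (c %/ 8)))
          (cmul (cmul (ceb (a %% 8)) (ceb (d %% 8))) (ceb (c %% 8)))))).
Definition cR (n : nat) : seq dd :=
  vlin (iota 0 512) (nth d0 cPhiV) (fun m =>
    vscl (cmu (ceb (m %/ 8 %/ 8))) (ctens (ceb (m %% 8)) (cmul (ceb n) (cS (ceb (m %/ 8 %% 8)))))).
Definition cDn (n : nat) : seq dd := vadd (cL n) (vscl dm1 (cR n)).
Definition cDt := Eval vm_compute in mkseq cDn 8.
Lemma cDtE : cDt = mkseq cDn 8. Proof. by vm_compute. Qed.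
Definition getrow (m : seq dd) (t : nat) : seq dd := mkseq (fun r => nth d0 m (8 * t + r)) 8.
Definition Rw (n t : nat) : seq dd := getrow (nth [::] cDt n) t.
Definition single (row : seq dd) (r0 : nat) : bool :=
  all (fun r => (r == r0) || dz (nth d0 row r)) (iota 0 8).
Definition ispow2 (z : Z) : bool := has (fun m => Z.eqb z (p2 m)) (iota 0 40).
Definition goodrow (row : seq dd) (r0 : nat) : bool :=
  single row r0 && (let x := nth d0 row r0 in ispow2 (Z.add (Z.mul x.1.1 x.1.1) (Z.mul x.1.2 x.1.2))).
Definition combo (r0 : nat) : seq dd :=
  match r0 with
  | 0 => Rw 6 2
  | 1 => Rw 5 0
  | 2 => vadd (Rw 2 0) (vscl dm1 (Rw 6 0))
  | 4 => Rw 2 6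
  | 5 => vadd (Rw 3 2) (vscl (Z0, Z_1, 1%N) (Rw 5 0))
  | 6 => vadd (Rw 2 0) (Rw 6 0)
  | _ => Rw 3 0
  end.
Lemma comboCheck : all (fun r0 => goodrow (combo r0) r0) [:: 0; 1; 2; 4; 5; 6; 7]%N.
Proof. by vm_compute. Qed.
Lemma col3Check : all (fun n => all (fun t => dz (nth d0 (nth [::] cDt n) (8 * t + 3))) (iota 0 8)) (iota 0 8).
Proof. by vm_compute. Qed.



Section Interp.
Variables (k : fieldType) (j : k).
Hypothesis hj : j * j = -1.
Hypothesis h2 : (2:k) != 0.

Definition zR (z : Z) : k := (int_of_Z z)%:~R.
Definition hh : k := 2^-1.
Definition phi (x : dd) : k := (zR x.1.1 + zR x.1.2 * j) * hh ^+ x.2.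

Lemma zRD a b : zR (Z.add a b) = zR a + zR b.
Proof. by rewrite /zR -intrD -rmorphD. Qed.
Lemma zRM a b : zR (Z.mul a b) = zR a * zR b.
Proof. by rewrite /zR -intrM -rmorphM. Qed.
Lemma zRN a : zR (Z.opp a) = - zR a.
Proof. by rewrite /zR -mulrNz -rmorphN. Qed.
Lemma zRB a b : zR (Z.sub a b) = zR a - zR b.
Proof. by rewrite -Z.add_opp_r zRD zRN. Qed.
Lemma zR0 : zR Z0 = 0. Proof. by []. Qed.
Lemma zR1 : zR Z_1 = 1. Proof. by []. Qed.
Lemma zR2 : zR Z_2 = 2. Proof. by []. Qed.
Lemma zRp2 n : zR (p2 n) = 2 ^+ n.
Proof. elim: n => [|n IH]; first by []. by rewrite /p2 iterS -/(p2 n) zRM zR2 IH exprS. Qed.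
Lemma hh2 : hh * 2 = 1. Proof. by rewrite /hh mulVf. Qed.

Lemma phi0 : phi d0 = 0. Proof. by rewrite /phi /= zR0 !mul0r add0r mul0r. Qed.
Lemma phi1 : phi d1 = 1. Proof. by rewrite /phi /= zR0 zR1 mul0r addr0 mulr1. Qed.

Lemma phiD x y : phi (dadd x y) = phi x + phi y.
Proof.
case: x => [[a b] e]; case: y => [[c d] f]; rewrite /dadd /phi /=.
case: leqP => H.
- rewrite !zRD !zRM zRp2 -(subnK H) exprD addnK.
  have Hu : 2 ^+ (f - e) * hh ^+ (f - e) = 1 by rewrite -exprMn mulrC hh2 expr1n.
  set v := 2 ^+ _ in Hu *; set u := hh ^+ _ in Hu *; set w := hh ^+ e.
  have -> : (zR a * v + zR c + (zR b * v + zR d) * j) * (u * w) =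
    (zR a + zR b * j) * w * (v * u) + (zR c + zR d * j) * (u * w) by ring.
  by rewrite Hu mulr1.
- have H' : (f <= e)%N by apply: ltnW.
  rewrite !zRD !zRM zRp2 -(subnK H') exprD addnK.
  have Hu : 2 ^+ (e - f) * hh ^+ (e - f) = 1 by rewrite -exprMn mulrC hh2 expr1n.
  set v := 2 ^+ _ in Hu *; set u := hh ^+ _ in Hu *; set w := hh ^+ f.
  have -> : (zR a + zR c * v + (zR b + zR d * v) * j) * (u * w) =
    (zR a + zR b * j) * (u * w) + (zR c + zR d * j) * w * (v * u) by ring.
  by rewrite Hu mulr1.
Qed.

Lemma phiM x y : phi (dmul x y) = phi x * phi y.
Proof.
case: x => [[a b] e]; case: y => [[c d] f]; rewrite /dmul /phi /=.
rewrite zRB zRD !zRM exprD.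
have -> : (zR a + zR b * j) * hh ^+ e * ((zR c + zR d * j) * hh ^+ f) =
  (zR a * zR c - zR b * zR d + (zR a * zR d + zR b * zR c) * j) * (hh ^+ e * hh ^+ f)
  + zR b * zR d * (j * j + 1) * (hh ^+ e * hh ^+ f) by ring.
by rewrite hj addNr mulr0 mul0r addr0.
Qed.

Lemma phiz x : dz x -> phi x = 0.
Proof.
case: x => [[a b] e]; rewrite /dz /phi /= => /andP[H1 H2].
move/Z.eqb_spec: H1 => ->; move/Z.eqb_spec: H2 => ->.
by rewrite zR0 mul0r addr0 mul0r.
Qed.

Lemma phi_nz x : ispow2 (Z.add (Z.mul x.1.1 x.1.1) (Z.mul x.1.2 x.1.2)) -> phi x != 0.
Proof.
case: x => [[a b] e] /= /hasP [m _ /Z.eqb_spec E].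
apply/negP => /eqP H0.
have : (zR a + zR b * j) * (zR a - zR b * j) * (hh ^+ e * hh ^+ e) = 0.
  have -> : (zR a + zR b * j) * (zR a - zR b * j) * (hh ^+ e * hh ^+ e) =
    ((zR a + zR b * j) * hh ^+ e) * ((zR a - zR b * j) * hh ^+ e) by ring.
  by move: H0; rewrite /phi /= => ->; rewrite mul0r.
have -> : (zR a + zR b * j) * (zR a - zR b * j) = zR a * zR a + zR b * zR b * - (j * j) by ring.
rewrite hj opprK mulr1 -!zRM -zRD E zRp2.
by move/eqP; rewrite !mulf_eq0 !expf_eq0 /hh invr_eq0 (negbTE h2) !andbF.
Qed.

Lemma phi_dsum s f : phi (dsum s f) = \sum_(n <- s) phi (f n).
Proof.
elim: s => [|n s IH]; first by rewrite big_nil /dsum /= phi0.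
by rewrite big_cons /dsum /= phiD // -IH.
Qed.

Lemma phi_dsk x y : phi (dsk x y) = phi x * phi y.
Proof. rewrite /dsk; case: ifP => H; last by rewrite phiM. by rewrite (phiz H) mul0r phi0. Qed.

Lemma phi_ifz x y : phi (if dz x then d0 else dmul x y) = phi x * phi y.
Proof. exact: phi_dsk. Qed.

Lemma phi_dsumv m u f :
  phi (dsumv m u f) = \sum_(i <- iota 0 (size u)) phi (nth d0 u i) * phi (f (m + i)%N).
Proof.
elim: u m => [|x u IH] m /=; first by rewrite big_nil phi0.
rewrite big_cons /=.
have -> : iota 1 (size u) = map (addn 1) (iota 0 (size u)) by rewrite -iotaDl.
rewrite big_map.
have E : \sum_(j <- iota 0 (size u)) phi (nth d0 (x :: u) (1 + j)) * phi (f (m + (1 + j))%N) =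
         phi (dsumv m.+1 u f).
  by rewrite IH; apply: eq_bigr => i _; rewrite add1n addSnnS.
case: ifP => Hx.
  by rewrite -E (phiz Hx) mul0r add0r.
by rewrite phiD phiM addn0 -E.
Qed.

Lemma phi_dsumvN N u f :
  phi (dsumv 0 (take N u) f) = \sum_(n <- iota 0 N) phi (nth d0 u n) * phi (f n).
Proof.
rewrite phi_dsumv size_take.
have Hm : (minn N (size u) <= N)%N by rewrite geq_minl.
have -> : iota 0 N = iota 0 (minn N (size u)) ++ iota (0 + minn N (size u)) (N - minn N (size u)).
  by rewrite -iotaD subnKC.
rewrite big_cat /=.
have -> : \sum_(n <- iota (0 + minn N (size u)) (N - minn N (size u))) phi (nth d0 u n) * phi (f n) = 0.
  rewrite big_seq big1 // => i; rewrite mem_iota add0n => /andP[Hi1 Hi2].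
  rewrite nth_default ?phi0 ?mul0r //; lia.
rewrite addr0 !big_seq; apply: eq_bigr => i; rewrite mem_iota add0n => /andP[_ Hi].
rewrite add0n nth_take //; apply: leq_trans Hi _; exact: geq_minl.
Qed.

Lemma nth_vadd u v i : phi (nth d0 (vadd u v) i) = phi (nth d0 u i) + phi (nth d0 v i).
Proof.
elim: u v i => [|x u IH] [|y v] [|i] /=; rewrite ?phi0 ?add0r ?addr0 ?phiD //.
Qed.

Lemma nth_vscl c u i : phi (nth d0 (vscl c u) i) = phi c * phi (nth d0 u i).
Proof.
rewrite /vscl; case: (ltnP i (size u)) => H; first by rewrite (nth_map d0) // phiM.
by rewrite !nth_default ?size_map // phi0 mulr0.
Qed.

Lemma nth_vsum s F i : phi (nth d0 (vsum s F) i) = \sum_(n <- s) phi (nth d0 (F n) i).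
Proof.
elim: s => [|n s IH]; first by rewrite big_nil /= nth_nil phi0.
by rewrite big_cons /= nth_vadd -IH.
Qed.

Lemma nth_vlin s cf F i :
  phi (nth d0 (vlin s cf F) i) = \sum_(n <- s) phi (cf n) * phi (nth d0 (F n) i).
Proof.
elim: s => [|n s IH]; first by rewrite big_nil /= nth_nil phi0.
rewrite big_cons /=; case: ifP => H.
  by rewrite IH phiz // mul0r add0r.
by rewrite nth_vadd nth_vscl IH.
Qed.

Lemma deqP x y : deq x y -> phi x = phi y.
Proof.
case: x => [[a b] e]; case: y => [[c d] f]; rewrite /deq /phi /= => /andP[H1 H2].
move/Z.eqb_spec: H1 => H1; move/Z.eqb_spec: H2 => H2.
have E1 := congr1 (zR) H1; have E2 := congr1 (zR) H2.
rewrite !zRM !zRp2 in E1 E2.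
have Hu : forall n, (2:k) ^+ n * hh ^+ n = 1.
  by move=> n; rewrite -exprMn mulrC hh2 // expr1n.
transitivity ((zR a * 2 ^+ f + zR b * 2 ^+ f * j) * hh ^+ e * hh ^+ f).
  have -> : (zR a * 2 ^+ f + zR b * 2 ^+ f * j) * hh ^+ e * hh ^+ f =
    (zR a + zR b * j) * hh ^+ e * (2 ^+ f * hh ^+ f) by ring.
  by rewrite Hu mulr1.
rewrite E1 E2.
have -> : (zR c * 2 ^+ e + zR d * 2 ^+ e * j) * hh ^+ e * hh ^+ f =
    (zR c + zR d * j) * hh ^+ f * (2 ^+ e * hh ^+ e) by ring.
by rewrite Hu mulr1.
Qed.

Section Gen.
Variables (T : finType) (N : nat) (enc : T -> nat) (dec : nat -> T).
Hypothesis enc_lt : forall t, (enc t < N)%N.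
Hypothesis encK : forall t, dec (enc t) = t.
Hypothesis decK : forall n, (n < N)%N -> enc (dec n) = n.

Definition IHg (c : seq dd) : {ffun T -> k} := [ffun t => phi (nth d0 c (enc t))].

Lemma sum_iota (V : zmodType) (F : T -> V) : \sum_t F t = \sum_(n <- iota 0 N) F (dec n).
Proof.
have -> : iota 0 N = index_iota 0 N by rewrite /index_iota subn0.
rewrite big_mkord.
have bij : bijective (fun i : 'I_N => dec i).
  exists (fun t => Ordinal (enc_lt t)) => [i|t] /=; last by rewrite encK.
  by apply: val_inj => /=; rewrite decK.
by rewrite (reindex _ (onW_bij _ bij)).
Qed.

Lemma IHg_add u v : IHg u + IHg v = IHg (vadd u v).
Proof. by apply/ffunP => t; rewrite !ffunE nth_vadd. Qed.

Lemma IHg_scl c u : phi c *F IHg u = IHg (vscl c u).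
Proof. by apply/ffunP => t; rewrite !ffunE nth_vscl. Qed.

Lemma IHg_sum s F : \sum_(n <- s) IHg (F n) = IHg (vsum s F).
Proof.
apply/ffunP => t; rewrite sum_ffunE ffunE nth_vsum.
by apply: eq_bigr => n _; rewrite ffunE.
Qed.

Lemma IHg_lin s cf F : \sum_(n <- s) phi (cf n) *F IHg (F n) = IHg (vlin s cf F).
Proof.
apply/ffunP => t; rewrite sum_ffunE ffunE nth_vlin.
by apply: eq_bigr => n _; rewrite !ffunE.
Qed.

Lemma IHg_veq u v : veq u v -> IHg u = IHg v.
Proof.
move=> /allP H; apply/ffunP => t; rewrite !ffunE.
case: (ltnP (enc t) (maxn (size u) (size v))) => Ht.
  by apply: deqP; apply: H; rewrite mem_iota.
rewrite geq_max in Ht; case/andP: Ht => Hu Hv.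
by rewrite !nth_default.
Qed.

Lemma IHgE c t : IHg c t = phi (nth d0 c (enc t)).
Proof. by rewrite ffunE. Qed.

Lemma IHg_dec c n : (n < N)%N -> IHg c (dec n) = phi (nth d0 c n).
Proof. by move=> H; rewrite ffunE decK. Qed.

Variable C : T -> T -> T -> k.
Variable Cc : nat -> nat -> nat -> dd.
Hypothesis HC : forall n m t, (n < N)%N -> (m < N)%N -> C (dec n) (dec m) t = phi (Cc n m (enc t)).

Lemma IHg_mul u v :
  [ffun t => \sum_p \sum_q IHg u p * IHg v q * C p q t] = IHg (cmulg N Cc u v).
Proof.
apply/ffunP => t; rewrite !ffunE nth_mkseq // phi_dsumvN sum_iota.
apply: eq_big_seq => n; rewrite mem_iota add0n => /andP[_ Hn].
rewrite phi_dsumvN sum_iota big_distrr /= IHg_dec //.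
apply: eq_big_seq => m; rewrite mem_iota add0n => /andP[_ Hm].
by rewrite IHg_dec // HC // mulrA.
Qed.
End Gen.

Lemma enc1_lt t : (enc1 t < 8)%N.
Proof. case: t => [[a Ha] [b Hb]]; rewrite /enc1 /=; lia. Qed.
Lemma enc1_1 t : (enc1 t %/ 4 = val t.1)%N.
Proof. case: t => [[a Ha] [b Hb]]; rewrite /enc1 /=; lia. Qed.
Lemma enc1_2 t : (enc1 t %% 4 = val t.2)%N.
Proof. case: t => [[a Ha] [b Hb]]; rewrite /enc1 /=; lia. Qed.
Lemma dec1_1 n : (n < 8)%N -> val (dec1 n).1 = (n %/ 4)%N.
Proof. by move=> H; rewrite /dec1 /= inordK //; lia. Qed.
Lemma dec1_2 n : val (dec1 n).2 = (n %% 4)%N.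
Proof. by rewrite /dec1 /= inordK //; lia. Qed.
Lemma enc1K t : dec1 (enc1 t) = t.
Proof. by case: t => a b; rewrite /dec1 (enc1_1 (a,b)) (enc1_2 (a,b)) /= !inord_val. Qed.
Lemma dec1K n : (n < 8)%N -> enc1 (dec1 n) = n.
Proof. move=> H; rewrite /enc1 dec1_1 // dec1_2; lia. Qed.

Lemma enc2_lt t : (enc2 t < 64)%N.
Proof. have := enc1_lt t.1; have := enc1_lt t.2; rewrite /enc2; lia. Qed.
Lemma enc2_1 t : (enc2 t %/ 8 = enc1 t.1)%N.
Proof. have := enc1_lt t.2; rewrite /enc2; lia. Qed.
Lemma enc2_2 t : (enc2 t %% 8 = enc1 t.2)%N.
Proof. have := enc1_lt t.2; rewrite /enc2; lia. Qed.
Lemma enc2K t : dec2 (enc2 t) = t.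
Proof. by case: t => a b; rewrite /dec2 enc2_1 enc2_2 !enc1K. Qed.
Lemma dec2K n : (n < 64)%N -> enc2 (dec2 n) = n.
Proof.
move=> H; rewrite /enc2 /dec2 /= !dec1K; try lia.
Qed.

Lemma enc3_lt t : (enc3 t < 512)%N.
Proof. have := enc2_lt t.1; have := enc1_lt t.2; rewrite /enc3; lia. Qed.
Lemma enc3_1 t : (enc3 t %/ 8 = enc2 t.1)%N.
Proof. have := enc1_lt t.2; rewrite /enc3; lia. Qed.
Lemma enc3_2 t : (enc3 t %% 8 = enc1 t.2)%N.
Proof. have := enc1_lt t.2; rewrite /enc3; lia. Qed.
Lemma enc3K t : dec3 (enc3 t) = t.
Proof. by case: t => a b; rewrite /dec3 enc3_1 enc3_2 enc2K enc1K. Qed.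
Lemma dec3K n : (n < 512)%N -> enc3 (dec3 n) = n.
Proof.
move=> H; rewrite /enc3 /dec3 /= dec2K ?dec1K; lia.
Qed.


Notation IH1 := (@IHg B enc1).
Notation IH2 := (@IHg _ enc2).
Notation IH3 := (@IHg _ enc3).

Lemma sum1 (V : zmodType) (F : B -> V) : \sum_t F t = \sum_(n <- iota 0 8) F (dec1 n).
Proof. exact: (sum_iota enc1_lt enc1K dec1K). Qed.
Lemma sum2 (V : zmodType) (F : B * B -> V) : \sum_t F t = \sum_(n <- iota 0 64) F (dec2 n).
Proof. exact: (sum_iota enc2_lt enc2K dec2K). Qed.
Lemma sum3 (V : zmodType) (F : B * B * B -> V) : \sum_t F t = \sum_(n <- iota 0 512) F (dec3 n).
Proof. exact: (sum_iota enc3_lt enc3K dec3K). Qed.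

Lemma phi_dsign n : phi (dsign n) = (-1) ^+ n.
Proof.
rewrite /dsign -signr_odd; case: (odd n); last by rewrite phi1.
by rewrite /phi /= zR0 mul0r addr0 expr0 mulr1 expr1.
Qed.

Lemma cstE n m t : (n < 8)%N -> (m < 8)%N ->
  cst k (dec1 n) (dec1 m) t = phi (cstc n m (enc1 t)).
Proof.
move=> Hn Hm; rewrite /cst /cstc !dec1_1 // !dec1_2 enc1_1 enc1_2.
by case: ifP => _; rewrite ?phi_dsign ?phi0.
Qed.

Lemma cst2E n m t : (n < 64)%N -> (m < 64)%N ->
  cst k (dec2 n).1 (dec2 m).1 t.1 * cst k (dec2 n).2 (dec2 m).2 t.2 = phi (cstc2 n m (enc2 t)).
Proof.
move=> Hn Hm; rewrite /cstc2 phi_dsk enc2_1 enc2_2 /= !cstE //; lia.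
Qed.

Lemma cst3E n m t : (n < 512)%N -> (m < 512)%N ->
  cst k (dec3 n).1.1 (dec3 m).1.1 t.1.1 * cst k (dec3 n).1.2 (dec3 m).1.2 t.1.2 *
  cst k (dec3 n).2 (dec3 m).2 t.2 = phi (cstc3 n m (enc3 t)).
Proof.
move=> Hn Hm; rewrite /cstc3 !phi_dsk enc3_1 enc3_2 enc2_1 enc2_2 /= !cstE //; lia.
Qed.

Lemma mulH_I u v : mulH (IH1 u) (IH1 v) = IH1 (cmulg 8 cstc u v).
Proof. exact: (IHg_mul enc1_lt enc1K dec1K cstE). Qed.
Lemma mulH2_I u v : mulH2 (IH2 u) (IH2 v) = IH2 (cmulg 64 cstc2 u v).
Proof. exact: (IHg_mul enc2_lt enc2K dec2K cst2E). Qed.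
Lemma mulH3_I u v : mulH3 (IH3 u) (IH3 v) = IH3 (cmulg 512 cstc3 u v).
Proof. exact: (IHg_mul enc3_lt enc3K dec3K cst3E). Qed.

Lemma ebE p : eb k p = IH1 (ceb (enc1 p)).
Proof.
apply/ffunP => t; rewrite !ffunE nth_mkseq ?enc1_lt // (inj_eq (can_inj enc1K)).
by case: (t == p); rewrite ?phi1 ?phi0.
Qed.
Lemma oneE : oneH k = IH1 cone. Proof. by rewrite /oneH ebE. Qed.
Lemma gE : gH k = IH1 cg. Proof. by rewrite /gH ebE /enc1 /= inordK. Qed.
Lemma xHE : Defs.xH k = IH1 cx. Proof. by rewrite /Defs.xH ebE /enc1 /= inordK. Qed.

Lemma tensE u v : tens (IH1 u) (IH1 v) = IH2 (ctens u v).
Proof.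
apply/ffunP => t; rewrite !ffunE nth_mkseq ?enc2_lt // phiM enc2_1 enc2_2.
by rewrite ?ffunE.
Qed.
Lemma tens3E u v w : tens3 (IH1 u) (IH1 v) (IH1 w) = IH3 (ctens3 u v w).
Proof.
apply/ffunP => t; rewrite !ffunE nth_mkseq ?enc3_lt // !phiM enc3_1 enc3_2 enc2_1 enc2_2.
by rewrite ?ffunE.
Qed.
Lemma one2E : one2 k = IH2 cone2. Proof. by rewrite /one2 oneE tensE. Qed.
Lemma one3E : one3 k = IH3 cone3. Proof. by rewrite /one3 oneE tens3E. Qed.

Lemma mulHE u v : mulH (IH1 u) (IH1 v) = IH1 (cmul u v). Proof. exact: mulH_I. Qed.
Lemma mulH2E u v : mulH2 (IH2 u) (IH2 v) = IH2 (cmul2 u v). Proof. exact: mulH2_I. Qed.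
Lemma mulH3E u v : mulH3 (IH3 u) (IH3 v) = IH3 (cmul3 u v). Proof. exact: mulH3_I. Qed.

Lemma powHE u n : powH (IH1 u) n = IH1 (cpow u n).
Proof. elim: n => [|n IH]; first by rewrite /= oneE. by rewrite /powH iterS -/(powH _ _) IH mulHE. Qed.
Lemma pow2E u n : pow2 (IH2 u) n = IH2 (cpow2 u n).
Proof. elim: n => [|n IH]; first by rewrite /= one2E. by rewrite /pow2 iterS -/(pow2 _ _) IH mulH2E. Qed.

Lemma phi_half : phi dhalf = 2^-1.
Proof. by rewrite /phi /= zR1 zR0 mul0r addr0 mul1r expr1. Qed.
Lemma phi_m1 : phi dm1 = -1.
Proof. by rewrite /phi /= zR0 mul0r addr0 mulr1. Qed.
Lemma phi_2 : phi d2 = 2.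
Proof. by rewrite /phi /= zR2 zR0 mul0r addr0 mulr1. Qed.
Lemma phi_j : phi dj = j.
Proof. by rewrite /phi /= zR1 zR0 add0r mul1r mulr1. Qed.

Lemma subE (T : finType) (enc : T -> nat) u v :
  IHg enc u - IHg enc v = IHg enc (vadd u (vscl dm1 v)).
Proof. by rewrite -IHg_add -IHg_scl phi_m1; congr (_ + _); apply/ffunP => t; rewrite !ffunE mulN1r. Qed.

Lemma oppE (T : finType) (enc : T -> nat) u : - IHg enc u = IHg enc (vscl dm1 u).
Proof. by apply/ffunP => t; rewrite !ffunE nth_vscl phi_m1 mulN1r. Qed.

Lemma ppE : pplus k = IH1 cpp.
Proof. by rewrite /pplus oneE gE IHg_add -phi_half IHg_scl. Qed.
Lemma pmE : pminus k = IH1 cpm.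
Proof. by rewrite /pminus oneE gE subE -phi_half IHg_scl. Qed.
Lemma PhiE : Phi k = IH3 cPhi.
Proof. by rewrite /Phi one3E pmE tens3E -phi_2 IHg_scl subE. Qed.

Lemma DeltaBE n : (n < 8)%N -> DeltaB j (dec1 n) = IH2 (nth [::] cDBt n).
Proof.
move=> Hn; rewrite cDBtE nth_mkseq // /DeltaB dec1_1 // dec1_2 /cDB.
rewrite /DeltaG /DeltaX gE xHE oneE ppE pmE !tensE -phi_j !IHg_scl !mulHE !IHg_add !tensE !IHg_add.
by rewrite !pow2E mulH2E.
Qed.
Lemma DeltaE u : Delta j (IH1 u) = IH2 (cDelta u).
Proof.
rewrite /Delta sum1 /cDelta -IHg_lin; apply: eq_big_seq => n.
rewrite mem_iota add0n => /andP[_ Hn].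
by rewrite (IHg_dec dec1K) // DeltaBE.
Qed.
Lemma SE u : S j (IH1 u) = IH1 (cS u).
Proof.
rewrite /S sum1 /cS -IHg_lin; apply: eq_big_seq => n.
rewrite mem_iota add0n => /andP[_ Hn].
rewrite (IHg_dec dec1K) // cSBtE nth_mkseq // /SB dec1_1 // dec1_2 /cSB.
rewrite /SX xHE ppE pmE gE -phi_j !IHg_scl IHg_add mulHE oppE !powHE mulHE. by rewrite IHg_scl.
Qed.

Lemma S_add x y : S j (x + y) = S j x + S j y.
Proof.
rewrite /S -big_split; apply: eq_bigr => p _.
by apply/ffunP => t; rewrite !ffunE mulrDl.
Qed.
Lemma S_scl c x : S j (c *F x) = c *F S j x.
Proof.
rewrite /S; apply/ffunP => t; rewrite !ffunE !sum_ffunE big_distrr.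
by apply: eq_bigr => p _; rewrite !ffunE -mulrA.
Qed.
Lemma S_zero : S j 0 = 0.
Proof. by rewrite /S big1 // => p _; apply/ffunP => t; rewrite !ffunE mul0r. Qed.

Variable Sinv : H k -> H k.
Hypothesis HS : forall u, S j (Sinv u) = u /\ Sinv (S j u) = u.

Lemma Sinv_add x y : Sinv (x + y) = Sinv x + Sinv y.
Proof.
have [E1 _] := HS x; have [E2 _] := HS y.
by rewrite -{1}E1 -{1}E2 -S_add; case: (HS (Sinv x + Sinv y)).
Qed.
Lemma Sinv_scl c x : Sinv (c *F x) = c *F Sinv x.
Proof.
have [E1 _] := HS x.
by rewrite -{1}E1 -S_scl; case: (HS (c *F Sinv x)).
Qed.
Lemma Sinv_zero : Sinv 0 = 0.
Proof. by rewrite -{1}S_zero; case: (HS 0). Qed.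
Lemma Sinv_sum (s : seq nat) (F : nat -> H k) : Sinv (\sum_(n <- s) F n) = \sum_(n <- s) Sinv (F n).
Proof.
elim: s => [|n s IH]; first by rewrite !big_nil Sinv_zero.
by rewrite !big_cons Sinv_add IH.
Qed.

Lemma decompH (u : H k) : u = \sum_(n <- iota 0 8) u (dec1 n) *F eb k (dec1 n).
Proof.
rewrite -(sum1 (fun p => u p *F eb k p)); apply/ffunP => t.
rewrite sum_ffunE (bigD1 t) //= big1 => [|p Hp]; rewrite !ffunE.
  by rewrite eqxx mulr1 addr0.
by rewrite eq_sym (negbTE Hp) mulr0.
Qed.

Lemma SinvE u : Sinv (IH1 u) = IH1 (cSinv u).
Proof.
rewrite {1}(decompH (IH1 u)) Sinv_sum /cSinv -IHg_lin; apply: eq_big_seq => n.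
rewrite mem_iota add0n => /andP[_ Hn].
rewrite Sinv_scl (IHg_dec dec1K) //; congr (_ *F _).
have := SinvCheckT; rewrite /SinvCheck => /allP /(_ n); rewrite mem_iota add0n Hn => /(_ isT) Hc.
rewrite ebE dec1K // -(@IHg_veq B enc1 _ _ Hc) -SE.
by case: (HS (IH1 (nth [::] cSinvT n))).
Qed.

Lemma mem_iota8 n : (n \in iota 0 8) = (n < 8)%N.
Proof. by rewrite mem_iota add0n. Qed.

Lemma cst_assoc p q r t :
  \sum_s cst k p q s * cst k s r t = \sum_s cst k q r s * cst k p s t.
Proof.
rewrite -(enc1K p) -(enc1K q) -(enc1K r) -(enc1K t).
have := cstAssocCheckT; rewrite /cstAssocCheck.
move=> /allP /(_ (enc1 p)); rewrite mem_iota8 enc1_lt => /(_ isT).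
move=> /allP /(_ (enc1 q)); rewrite mem_iota8 enc1_lt => /(_ isT).
move=> /allP /(_ (enc1 r)); rewrite mem_iota8 enc1_lt => /(_ isT).
move=> /allP /(_ (enc1 t)); rewrite mem_iota8 enc1_lt => /(_ isT).
move=> /deqP; rewrite !phi_dsum !sum1 => E.
transitivity (\sum_(m <- iota 0 8) phi (dmul (cstc (enc1 p) (enc1 q) m) (cstc m (enc1 r) (enc1 t)))).
  apply: eq_big_seq => m; rewrite mem_iota8 => Hm.
  by rewrite phiM !cstE ?enc1_lt // dec1K // enc1K.
rewrite E; apply: eq_big_seq => m; rewrite mem_iota8 => Hm.
by rewrite phiM !cstE ?enc1_lt // dec1K // enc1K.
Qed.

Lemma cst_1l q t : cst k (dec1 0) q t = (q == t)%:R.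
Proof.
rewrite -(enc1K q) cstE ?enc1_lt // enc1K -(inj_eq (can_inj enc1K)).
have := cstUnitCheckT; rewrite /cstUnitCheck.
move=> /allP /(_ (enc1 q)); rewrite mem_iota8 enc1_lt => /(_ isT).
move=> /allP /(_ (enc1 t)); rewrite mem_iota8 enc1_lt => /(_ isT) /deqP ->.
by case: (_ == _); rewrite ?phi1 ?phi0.
Qed.

Section Assoc.
Variable T : finType.
Variable C : T -> T -> T -> k.
Definition mulg (u v : {ffun T -> k}) : {ffun T -> k} :=
  [ffun t => \sum_p \sum_q u p * v q * C p q t].
Hypothesis HA : forall p q r t, \sum_s C p q s * C s r t = \sum_s C q r s * C p s t.

Lemma mulgA u v w : mulg (mulg u v) w = mulg u (mulg v w).
Proof.
apply/ffunP => t; rewrite !ffunE.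
transitivity (\sum_s \sum_r \sum_p \sum_q u p * v q * C p q s * w r * C s r t).
  apply: eq_bigr => s _; apply: eq_bigr => r _; rewrite ffunE -mulrA big_distrl /=.
  apply: eq_bigr => p _; rewrite big_distrl /=; apply: eq_bigr => q _; ring.
rewrite exchange_big /=.
under eq_bigr => r _ do rewrite exchange_big /=.
under eq_bigr => r _ do under eq_bigr => p _ do rewrite exchange_big /=.
rewrite exchange_big /=.
under eq_bigr => p _ do rewrite exchange_big /=.
transitivity (\sum_p \sum_q \sum_r u p * v q * w r * (\sum_s C q r s * C p s t)).
  apply: eq_bigr => p _; apply: eq_bigr => q _; apply: eq_bigr => r _.
  rewrite -HA big_distrr /=; apply: eq_bigr => s _; ring.
symmetry.
transitivity (\sum_p \sum_s \sum_q \sum_r u p * v q * w r * C q r s * C p s t).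
  apply: eq_bigr => p _; apply: eq_bigr => s _; rewrite ffunE big_distrr /= big_distrl /=.
  apply: eq_bigr => q _; rewrite big_distrr /= big_distrl /=; apply: eq_bigr => r _; ring.
under eq_bigr => p _ do rewrite exchange_big /=.
under eq_bigr => p _ do under eq_bigr => q _ do rewrite exchange_big /=.
apply: eq_bigr => p _; apply: eq_bigr => q _; apply: eq_bigr => r _.
rewrite big_distrr /=; apply: eq_bigr => s _; ring.
Qed.

Lemma mulg_1l e (u v : {ffun T -> k}) : (forall p, u p = (p == e)%:R) -> (forall q t, C e q t = (q == t)%:R) ->
  mulg u v = v.
Proof.
move=> Hu HC; apply/ffunP => t; rewrite ffunE (bigD1 e) //=.
rewrite [X in _ + X](eq_bigr (fun _ => 0)) => [|p Hp]; last first.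
  by rewrite big1 // => q _; rewrite Hu (negbTE Hp) !mul0r.
rewrite big1_eq addr0 (bigD1 t) //=.
rewrite [X in _ + X](eq_bigr (fun _ => 0)) => [|q Hq]; last by rewrite HC (negbTE Hq) mulr0.
by rewrite big1_eq Hu HC !eqxx mulr1 mul1r addr0.
Qed.
End Assoc.

Definition C3 (p q t : B * B * B) : k :=
  cst k p.1.1 q.1.1 t.1.1 * cst k p.1.2 q.1.2 t.1.2 * cst k p.2 q.2 t.2.

Lemma mulH3_g (u v : H3 k) : mulH3 u v = mulg C3 u v.
Proof. by []. Qed.

Lemma sum3split (X Y Z : B -> k) :
  \sum_(s : B * B * B) X s.1.1 * Y s.1.2 * Z s.2 = (\sum_a X a) * (\sum_b Y b) * (\sum_c Z c).
Proof.
transitivity (\sum_(s1 : B * B) \sum_(c : B) X s1.1 * Y s1.2 * Z c).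
  by rewrite pair_bigA.
transitivity (\sum_(a : B) \sum_(b : B) \sum_(c : B) X a * Y b * Z c).
  by symmetry; rewrite pair_bigA.
rewrite -mulrA big_distrl /=; apply: eq_bigr => a _.
rewrite big_distrl /= big_distrr /=; apply: eq_bigr => b _.
rewrite mulrA big_distrr /=; apply: eq_bigr => c _; ring.
Qed.

Lemma C3_assoc p q r t : \sum_s C3 p q s * C3 s r t = \sum_s C3 q r s * C3 p s t.
Proof.
rewrite /C3.
transitivity (\sum_(s : B * B * B) (cst k p.1.1 q.1.1 s.1.1 * cst k s.1.1 r.1.1 t.1.1) *
   (cst k p.1.2 q.1.2 s.1.2 * cst k s.1.2 r.1.2 t.1.2) * (cst k p.2 q.2 s.2 * cst k s.2 r.2 t.2)).
  by apply: eq_bigr => s _; ring.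
rewrite (sum3split (fun a => cst k p.1.1 q.1.1 a * cst k a r.1.1 t.1.1)
  (fun b => cst k p.1.2 q.1.2 b * cst k b r.1.2 t.1.2) (fun c => cst k p.2 q.2 c * cst k c r.2 t.2)).
rewrite !cst_assoc.
rewrite -(sum3split (fun a => cst k q.1.1 r.1.1 a * cst k p.1.1 a t.1.1)
  (fun b => cst k q.1.2 r.1.2 b * cst k p.1.2 b t.1.2) (fun c => cst k q.2 r.2 c * cst k p.2 c t.2)).
by apply: eq_bigr => s _; ring.
Qed.

Lemma mulH3A (u v w : H3 k) : mulH3 (mulH3 u v) w = mulH3 u (mulH3 v w).
Proof. rewrite !mulH3_g; exact: mulgA C3_assoc u v w. Qed.

Lemma mulH3_1l (v : H3 k) : mulH3 (one3 k) v = v.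
Proof.
rewrite mulH3_g; apply: (mulg_1l (e := (dec1 0, dec1 0, dec1 0))).
  move=> p; rewrite /one3 /oneH !ffunE.
  have -> : (ord0, ord0) = dec1 0.
    by rewrite /dec1; congr pair; apply: val_inj; rewrite /= inordK.
  by case: p => [[a b] c] /=; rewrite !xpair_eqE; do 3 case: (_ == _); rewrite ?mulr1 ?mulr0 ?mul0r.
move=> q t; rewrite /C3 /= !cst_1l.
by case: q => [[a b] c]; case: t => [[a' b'] c'] /=; rewrite !xpair_eqE; do 3 case: (_ == _); rewrite ?mulr1 ?mulr0 ?mul0r.
Qed.

Variable Phiinv : H3 k.
Hypothesis HP : mulH3 (Phi k) Phiinv = one3 k.

Lemma PhiVE : Phi k = IH3 cPhiV.
Proof. by rewrite cPhiVE PhiE. Qed.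

Lemma PhiinvE : Phiinv = Phi k.
Proof.
have PP : mulH3 (Phi k) (Phi k) = one3 k.
  by rewrite PhiVE mulH3E one3E; apply: IHg_veq; exact: PhiPhiCheck.
have P1 : mulH3 (Phi k) (one3 k) = Phi k.
  by rewrite PhiVE one3E mulH3E; apply: IHg_veq; exact: Phi1Check.
by rewrite -(mulH3_1l Phiinv) -PP mulH3A HP P1.
Qed.

Lemma sclA (T : finType) (a b : k) (u : {ffun T -> k}) : (a * b) *F u = a *F (b *F u).
Proof. by apply/ffunP => t; rewrite !ffunE mulrA. Qed.
Lemma scl_sum (T : finType) (I : Type) (s : seq I) (a : k) (F : I -> {ffun T -> k}) :
  a *F (\sum_(i <- s) F i) = \sum_(i <- s) a *F F i.
Proof.
apply/ffunP => t; rewrite ffunE !sum_ffunE big_distrr /=.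
by apply: eq_bigr => i _; rewrite ffunE.
Qed.

Section SumLin.
Variables (T : finType) (enc : T -> nat).
Lemma sum_lin3 (c : seq dd) (X : B * B * B -> {ffun T -> k}) (Xc : nat -> seq dd) :
  (forall n, (n < 512)%N -> X (dec3 n) = IHg enc (Xc n)) ->
  \sum_p IH3 c p *F X p = IHg enc (vlin (iota 0 512) (nth d0 c) Xc).
Proof.
move=> HX; rewrite sum3 -IHg_lin; apply: eq_big_seq => n; rewrite mem_iota add0n => /andP[_ Hn].
by rewrite (IHg_dec dec3K) // HX.
Qed.
Lemma sum_lin2 (c : seq dd) (X : B * B -> {ffun T -> k}) (Xc : nat -> seq dd) :
  (forall n, (n < 64)%N -> X (dec2 n) = IHg enc (Xc n)) ->
  \sum_p IH2 c p *F X p = IHg enc (vlin (iota 0 64) (nth d0 c) Xc).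
Proof.
move=> HX; rewrite sum2 -IHg_lin; apply: eq_big_seq => n; rewrite mem_iota add0n => /andP[_ Hn].
by rewrite (IHg_dec dec2K) // HX.
Qed.
End SumLin.

Lemma ebD x : (x < 8)%N -> eb k (dec1 x) = IH1 (ceb x).
Proof. by move=> Hx; rewrite ebE dec1K. Qed.

Lemma SSopE T : SSop j (IH2 T) = IH2 (cSSop T).
Proof.
rewrite /SSop /cSSop; apply: sum_lin2 => n Hn.
rewrite !ebD; try (by lia).
by rewrite !SE tensE.
Qed.

Ltac crunch := repeat (first [rewrite mulHE | rewrite SE | rewrite tensE | rewrite DeltaE
  | rewrite mulH2E | rewrite gE | rewrite oneE | rewrite SinvE | rewrite SSopE]).

Lemma gammaI : gammaE j Phiinv = IH2 cgammaV.
Proof.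
rewrite cgammaVE /gammaE PhiinvE PhiVE /alphaH.
under eq_bigr => p _ do under eq_bigr => q _ do rewrite sclA.
under eq_bigr => p _ do rewrite -scl_sum.
apply: sum_lin3 => n Hn; apply: sum_lin3 => m Hm.
rewrite !ebD; try (by lia).
by repeat (first [rewrite mulHE | rewrite SE | rewrite tensE | rewrite DeltaE | rewrite mulH2E
  | rewrite gE | rewrite oneE]).
Qed.

Lemma deltaI : deltaE j Phiinv = IH2 cdeltaV.
Proof.
rewrite cdeltaVE /deltaE PhiinvE PhiVE /alphaH /betaH.
under eq_bigr => p _ do under eq_bigr => q _ do rewrite sclA.
under eq_bigr => p _ do rewrite -scl_sum.
apply: sum_lin3 => n Hn; apply: sum_lin3 => m Hm.
rewrite !ebD; try (by lia).
by crunch.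
Qed.

Lemma fI : fE j Phiinv = IH2 cfV.
Proof.
rewrite cfVE /fE gammaI PhiinvE PhiVE /alphaH /betaH.
apply: sum_lin3 => m Hm.
rewrite !ebD; try (by lia).
by crunch.
Qed.

Lemma finvI : finvE j Phiinv = IH2 cfinvV.
Proof.
rewrite cfinvVE /finvE deltaI PhiinvE PhiVE /alphaH /betaH.
apply: sum_lin3 => m Hm.
rewrite !ebD; try (by lia).
by crunch.
Qed.

Lemma pRI : pR j Phiinv = IH2 cpRV.
Proof.
rewrite cpRVE /pR PhiinvE PhiVE /alphaH /betaH.
apply: sum_lin3 => m Hm.
rewrite !ebD; try (by lia).
by crunch.
Qed.

Lemma qRI : qR Sinv = IH2 cqRV.
Proof.
rewrite cqRVE /qR PhiVE /alphaH /betaH.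
apply: sum_lin3 => m Hm.
rewrite !ebD; try (by lia).
by crunch.
Qed.

Lemma UI : UE j Sinv Phiinv = IH2 (ctens cg cone).
Proof.
rewrite -(@IHg_veq _ enc2 _ _ cUCheck) /UE finvI qRI.
under eq_bigr => p _ do under eq_bigr => q _ do rewrite sclA.
under eq_bigr => p _ do rewrite -scl_sum.
apply: sum_lin2 => n Hn; apply: sum_lin2 => m Hm.
rewrite !ebD; try (by lia).
by crunch.
Qed.

Lemma VI : VE j Sinv Phiinv = IH2 (ctens cone cone).
Proof.
rewrite -(@IHg_veq _ enc2 _ _ cVCheck) /VE fI pRI.
under eq_bigr => p _ do under eq_bigr => q _ do rewrite sclA.
under eq_bigr => p _ do rewrite -scl_sum.
apply: sum_lin2 => n Hn; apply: sum_lin2 => m Hm.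
rewrite !ebD; try (by lia).
by crunch.
Qed.


Lemma Delta_add (x y : H k) : Delta j (x + y) = Delta j x + Delta j y.
Proof.
rewrite /Delta -big_split; apply: eq_bigr => p _.
by apply/ffunP => t; rewrite !ffunE mulrDl.
Qed.
Lemma Delta_scl c (x : H k) : Delta j (c *F x) = c *F Delta j x.
Proof.
rewrite /Delta; apply/ffunP => t; rewrite !ffunE !sum_ffunE big_distrr.
by apply: eq_bigr => p _; rewrite !ffunE -mulrA.
Qed.
Lemma mulH_addl (x y w : H k) : mulH (x + y) w = mulH x w + mulH y w.
Proof.
apply/ffunP => t; rewrite !ffunE -big_split /=; apply: eq_bigr => p _.
rewrite -big_split /=; apply: eq_bigr => q _; rewrite !ffunE /=; ring.
Qed.
Lemma mulH_scll c (x w : H k) : mulH (c *F x) w = c *F mulH x w.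
Proof.
apply/ffunP => t; rewrite !ffunE big_distrr /=; apply: eq_bigr => p _.
rewrite big_distrr /=; apply: eq_bigr => q _; rewrite !ffunE /=; ring.
Qed.

Variable lam : {ffun B -> k}.

Lemma evalf_add (x y : H k) : evalf lam (x + y) = evalf lam x + evalf lam y.
Proof. by rewrite /evalf -big_split; apply: eq_bigr => p _; rewrite ffunE mulrDr. Qed.
Lemma evalf_scl c (x : H k) : evalf lam (c *F x) = c * evalf lam x.
Proof. by rewrite /evalf big_distrr /=; apply: eq_bigr => p _; rewrite ffunE /=; ring. Qed.

Lemma scl_addl (T : finType) (a b : k) (u : {ffun T -> k}) : (a + b) *F u = a *F u + b *F u.
Proof. by apply/ffunP => t; rewrite !ffunE mulrDl. Qed.

Definition LHSf (h : H k) : H k :=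
  \sum_a \sum_c \sum_d
     (VE j Sinv Phiinv a * UE j Sinv Phiinv c * Delta j h d *
        evalf lam (mulH (mulH (eb k a.2) (eb k d.2)) (eb k c.2))) *F
     mulH (mulH (eb k a.1) (eb k d.1)) (eb k c.1).
Definition RHSf (h : H k) : H k :=
  \sum_q (Phiinv q * muH (eb k q.1.1) * evalf lam (mulH h (S j (eb k q.1.2)))) *F eb k q.2.

Lemma coint_iff : is_left_cointegral j Sinv Phiinv lam <-> forall h, LHSf h = RHSf h.
Proof. by []. Qed.

Lemma LHSf_add (x y : H k) : LHSf (x + y) = LHSf x + LHSf y.
Proof.
rewrite /LHSf -big_split; apply: eq_bigr => a _; rewrite -big_split; apply: eq_bigr => c _.
rewrite -big_split; apply: eq_bigr => d _.
have E : (Delta j x + Delta j y) d = Delta j x d + Delta j y d by rewrite ffunE.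
by rewrite Delta_add E mulrDr mulrDl scl_addl.
Qed.
Lemma LHSf_scl c (x : H k) : LHSf (c *F x) = c *F LHSf x.
Proof.
rewrite /LHSf scl_sum; apply: eq_bigr => a _; rewrite scl_sum; apply: eq_bigr => b _.
rewrite scl_sum; apply: eq_bigr => d _.
have E : (c *F Delta j x) d = c * Delta j x d by rewrite ffunE.
rewrite Delta_scl E -sclA; congr (_ *F _); ring.
Qed.
Lemma RHSf_add (x y : H k) : RHSf (x + y) = RHSf x + RHSf y.
Proof.
rewrite /RHSf -big_split; apply: eq_bigr => q _.
by rewrite mulH_addl evalf_add mulrDr scl_addl.
Qed.
Lemma RHSf_scl c (x : H k) : RHSf (c *F x) = c *F RHSf x.
Proof.
rewrite /RHSf scl_sum; apply: eq_bigr => q _.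
rewrite mulH_scll evalf_scl -sclA; congr (_ *F _); ring.
Qed.

Lemma lin_decomp (F : H k -> H k) :
  (forall x y, F (x + y) = F x + F y) -> (forall c x, F (c *F x) = c *F F x) ->
  forall h, F h = \sum_(n <- iota 0 8) h (dec1 n) *F F (eb k (dec1 n)).
Proof.
move=> Fa Fs h; rewrite {1}(decompH h).
elim: (iota 0 8) => [|n s IH]; last by rewrite !big_cons Fa Fs IH.
rewrite !big_nil.
have -> : (0 : H k) = 0 *F 0 by apply/ffunP => t; rewrite !ffunE mul0r.
by rewrite Fs; apply/ffunP => t; rewrite !ffunE !mul0r.
Qed.

Definition L2 (X : H2 k) : H k := [ffun t => \sum_r lam r * X (t, r)].
Lemma L2_add (X Y : H2 k) : L2 X + L2 Y = L2 (X + Y).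
Proof.
apply/ffunP => t; rewrite !ffunE -big_split; apply: eq_bigr => r _; by rewrite ffunE mulrDr.
Qed.
Lemma L2_scl c (X : H2 k) : c *F L2 X = L2 (c *F X).
Proof.
apply/ffunP => t; rewrite !ffunE big_distrr /=; apply: eq_bigr => r _; rewrite ffunE /=; ring.
Qed.
Lemma L2_0 : L2 0 = 0.
Proof. by apply/ffunP => t; rewrite !ffunE big1 // => r _; rewrite ffunE mulr0. Qed.
Lemma L2_sum (s : seq nat) (F : nat -> H2 k) : \sum_(i <- s) L2 (F i) = L2 (\sum_(i <- s) F i).
Proof.
elim: s => [|n s IH]; first by rewrite !big_nil L2_0.
by rewrite !big_cons IH L2_add.
Qed.

Lemma ev_o w o : evalf lam (IH1 w) *F IH1 o = L2 (IH2 (ctens o w)).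
Proof.
rewrite -tensE; apply/ffunP => t; rewrite !ffunE /evalf big_distrl /=.
by apply: eq_bigr => r _; rewrite !ffunE /=; ring.
Qed.

Lemma sum_lin2L (c : seq dd) (X : B * B -> H k) (Xc : nat -> seq dd) :
  (forall n, (n < 64)%N -> X (dec2 n) = L2 (IH2 (Xc n))) ->
  \sum_p IH2 c p *F X p = L2 (IH2 (vlin (iota 0 64) (nth d0 c) Xc)).
Proof.
move=> HX; rewrite sum2 -IHg_lin -L2_sum; apply: eq_big_seq => n.
rewrite mem_iota add0n => /andP[_ Hn].
by rewrite (IHg_dec dec2K) // HX // L2_scl.
Qed.
Lemma sum_lin3L (c : seq dd) (X : B * B * B -> H k) (Xc : nat -> seq dd) :
  (forall n, (n < 512)%N -> X (dec3 n) = L2 (IH2 (Xc n))) ->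
  \sum_p IH3 c p *F X p = L2 (IH2 (vlin (iota 0 512) (nth d0 c) Xc)).
Proof.
move=> HX; rewrite sum3 -IHg_lin -L2_sum; apply: eq_big_seq => n.
rewrite mem_iota add0n => /andP[_ Hn].
by rewrite (IHg_dec dec3K) // HX // L2_scl.
Qed.

Lemma muHE u : muH (IH1 u) = phi (cmu u).
Proof.
rewrite /muH /cmu phi_dsum sum1; apply: eq_big_seq => n.
rewrite mem_iota add0n => /andP[_ Hn].
rewrite (IHg_dec dec1K) // phiM dec1_1 // dec1_2.
by case: ifP => _; rewrite ?phi_dsign ?phi0.
Qed.

Lemma LHS_basis n : (n < 8)%N -> LHSf (eb k (dec1 n)) = L2 (IH2 (cL n)).
Proof.
move=> Hn; rewrite /LHSf VI UI ebD // DeltaE /cL.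
under eq_bigr => a _ do under eq_bigr => c _ do under eq_bigr => d _ do rewrite !sclA.
under eq_bigr => a _ do under eq_bigr => c _ do rewrite -scl_sum.
under eq_bigr => a _ do rewrite -scl_sum.
under eq_bigr => a _ do under eq_bigr => c _ do rewrite -scl_sum.
apply: sum_lin2L => a Ha; apply: sum_lin2L => c Hc; apply: sum_lin2L => d Hd.
rewrite !ebD; try (by lia).
by crunch; rewrite ev_o.
Qed.

Lemma RHS_basis n : (n < 8)%N -> RHSf (eb k (dec1 n)) = L2 (IH2 (cR n)).
Proof.
move=> Hn; rewrite /RHSf PhiinvE PhiVE /cR.
under eq_bigr => q _ do rewrite !sclA.
apply: sum_lin3L => m Hm.
rewrite !ebD; try (by lia).
crunch; rewrite muHE ev_o L2_scl.
by rewrite -IHg_scl.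
Qed.

Lemma basis_iff n : (n < 8)%N ->
  (LHSf (eb k (dec1 n)) = RHSf (eb k (dec1 n))) <-> L2 (IH2 (nth [::] cDt n)) = 0.
Proof.
move=> Hn; rewrite LHS_basis // RHS_basis // cDtE nth_mkseq // /cDn.
rewrite -IHg_add -IHg_scl phi_m1 -L2_add -L2_scl.
split=> [->|H].
  by apply/ffunP => t; rewrite !ffunE mulN1r addrN.
apply/eqP; rewrite -subr_eq0; apply/eqP; rewrite -H.
by apply/ffunP => t; rewrite !ffunE mulN1r.
Qed.

Definition rowsum (row : seq dd) : k := \sum_r lam r * phi (nth d0 row (enc1 r)).

Lemma L2_row m t : (t < 8)%N -> L2 (IH2 m) (dec1 t) = rowsum (getrow m t).
Proof.
move=> Ht; rewrite ffunE /rowsum; apply: eq_bigr => r _.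
by rewrite ffunE /getrow nth_mkseq ?enc1_lt // /enc2 /= dec1K.
Qed.
Lemma rowsum_add a b : rowsum (vadd a b) = rowsum a + rowsum b.
Proof. by rewrite /rowsum -big_split; apply: eq_bigr => r _; rewrite nth_vadd mulrDr. Qed.
Lemma rowsum_scl c a : rowsum (vscl c a) = phi c * rowsum a.
Proof. by rewrite /rowsum big_distrr; apply: eq_bigr => r _; rewrite nth_vscl /=; ring. Qed.

Lemma rowsum_single row r0 : (r0 < 8)%N -> single row r0 ->
  rowsum row = lam (dec1 r0) * phi (nth d0 row r0).
Proof.
move=> Hr /allP Hs; rewrite /rowsum sum1 (bigD1_seq r0) ?mem_iota8 ?iota_uniq //= dec1K //.
rewrite big_seq_cond big1 ?addr0 // => n /andP[Hn Hne].
have := Hs n Hn; rewrite (negbTE Hne) /= => Hz.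
by rewrite dec1K -?mem_iota8 // (phiz Hz) mulr0.
Qed.

Lemma x3E : x3idx = dec1 3.
Proof. by rewrite /x3idx /dec1; congr pair; apply: val_inj; rewrite /= inordK. Qed.

Lemma coint_char : is_left_cointegral j Sinv Phiinv lam <-> exists c, lam = c *F Pdual k x3idx.
Proof.
rewrite coint_iff; split.
- move=> H.
  have Hb n : (n < 8)%N -> L2 (IH2 (nth [::] cDt n)) = 0 by move=> Hn; apply/(basis_iff Hn)/H.
  have Rz n t : (n < 8)%N -> (t < 8)%N -> rowsum (Rw n t) = 0.
    by move=> Hn Ht; rewrite /Rw -L2_row // Hb // ffunE.
  have Hl r0 : r0 \in [:: 0; 1; 2; 4; 5; 6; 7]%N -> lam (dec1 r0) = 0.
    move=> Hr; have := allP comboCheck r0 Hr; rewrite /goodrow => /andP[Hs Hp].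
    have Hr8 : (r0 < 8)%N by move: Hr; rewrite !inE => /or4P[/eqP->|/eqP->|/eqP->|/or4P[/eqP->|/eqP->|/eqP->|/eqP->]].
    have Hz : rowsum (combo r0) = 0.
      move: Hr; rewrite !inE => /or4P[/eqP->|/eqP->|/eqP->|/or4P[/eqP->|/eqP->|/eqP->|/eqP->]].
      + by rewrite -[combo 0]/(Rw 6 2) Rz.
      + by rewrite -[combo 1]/(Rw 5 0) Rz.
      + by rewrite -[combo 2]/(vadd (Rw 2 0) (vscl dm1 (Rw 6 0))) rowsum_add rowsum_scl !Rz // mulr0 addr0.
      + by rewrite -[combo 4]/(Rw 2 6) Rz.
      + by rewrite -[combo 5]/(vadd (Rw 3 2) (vscl (Z0, Z_1, 1%N) (Rw 5 0))) rowsum_add rowsum_scl !Rz // mulr0 addr0.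
      + by rewrite -[combo 6]/(vadd (Rw 2 0) (Rw 6 0)) rowsum_add !Rz // addr0.
      + by rewrite -[combo 7]/(Rw 3 0) Rz.
    rewrite (rowsum_single Hr8 Hs) in Hz.
    apply/eqP; move: Hz => /eqP; rewrite mulf_eq0 (negbTE (phi_nz Hp)) orbF //.
  exists (lam x3idx); apply/ffunP => t; rewrite !ffunE.
  case: (eqVneq t x3idx) => [->|Ht]; first by rewrite mulr1.
  rewrite mulr0 -(enc1K t); apply: Hl.
  have H8 := enc1_lt t.
  have H3 : enc1 t != 3%N by apply: contra Ht => /eqP E; rewrite x3E -(enc1K t) E.
  move: H8 H3; case: (enc1 t) => [|[|[|[|[|[|[|[|m]]]]]]]] //.
- case=> c Hc h.
  rewrite (lin_decomp LHSf_add LHSf_scl h) (lin_decomp RHSf_add RHSf_scl h).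
  apply: eq_big_seq => n; rewrite mem_iota8 => Hn; congr (_ *F _); apply/(basis_iff Hn).
  apply/ffunP => t; rewrite -(enc1K t) L2_row ?enc1_lt // ffunE.
  rewrite /rowsum Hc (bigD1 x3idx) //= big1 => [|r Hr]; last by rewrite !ffunE (negbTE Hr) mulr0 mul0r.
  rewrite !ffunE eqxx mulr1 addr0 x3E dec1K //.
  have := col3Check => /allP /(_ n); rewrite mem_iota8 Hn => /(_ isT) /allP /(_ (enc1 t)).
  rewrite mem_iota8 enc1_lt => /(_ isT) Hz.
  by rewrite /getrow nth_mkseq // (phiz Hz) mulr0.
Qed.

End Interp.

Theorem mainTheorem16 (k : fieldType) (i : k) (s : bool)
    (Sinv : H k -> H k) (Phiinv : H3 k) :
  4.-primitive_root i ->
  (forall u, S ((-1) ^+ s * i) (Sinv u) = u /\ Sinv (S ((-1) ^+ s * i) u) = u) ->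
  mulH3 (Phi k) Phiinv = one3 k /\ mulH3 Phiinv (Phi k) = one3 k ->
  forall lam : {ffun B -> k},
    is_left_cointegral ((-1) ^+ s * i) Sinv Phiinv lam <->
    exists c : k, lam = c *F Pdual k x3idx.
Proof.
move=> Hi HS [HP _] lam.
have i4 : i ^+ 4 = 1 by apply: prim_expr_order.
have i2 : i ^+ 2 != 1 by rewrite -(prim_order_dvd Hi).
have hi : i * i = -1.
  have : (i ^+ 2 - 1) * (i ^+ 2 + 1) = 0.
    have -> : (i ^+ 2 - 1) * (i ^+ 2 + 1) = i ^+ 4 - 1 by ring.
    by rewrite i4 subrr.
  move/eqP; rewrite mulf_eq0 subr_eq0 (negbTE i2) /= addr_eq0 => /eqP <-.
  by rewrite expr2.
have hj : ((-1) ^+ s * i) * ((-1) ^+ s * i) = -1.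
  by case: (s : bool); rewrite /= ?expr0 ?expr1 ?mul1r ?mulN1r ?mulrNN.
have h2 : (2 : k) != 0.
  apply/negP => /eqP H2.
  have E : (1 : k) = -1 by apply/eqP; rewrite -subr_eq0 opprK -H2.
  by move: i2; rewrite expr2 hi -E eqxx.
exact: (coint_char hj h2 HS HP lam).
Qed.
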